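(* Let $M_G$ be a connected mixed graph of order $4$. Then $\operatorname{rank}N(M_G)=3$ if and only if either (1) $G=K_{1,1,2}$ (the complete graph $K_4$ minus an edge) and the unique mixed $4$-cycle of $M_G$ is positive, or (2) $G=K_4$ and, among the three mixed $4$-cycles of $M_G$, two are positive and one is semi-negative.
   Context: A mixed graph $M_G$ is obtained from a finite simple graph $G$ by orienting the edges of some subset of $E(G)$; it is connected if $G$ is. With $\omega=\frac{1+\mathbf{i}\sqrt3}{2}$, $N(M_G)=(n_{st})$ has entry $\omega$ for an arc from $u_s$ to $u_t$, $\bar\omega$ for an arc from $u_t$ to $u_s$, $1$ for an undirected edge, $0$ otherwise. A mixed cycle in $M_G$ is a mixed subgraph whose underlying graph is a cycle $v_1\cdots v_lv_1$; its weight is $n_{12}\cdots n_{l1}$. It is positive if the weight is $1$, semi-negative if it is $-\omega$ or $-\bar\omega$. *)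

(* Defs.v *)
From HB Require Import structures.
From mathcomp Require Import all_boot all_order all_algebra all_fingroup all_field.
Set Implicit Arguments. Unset Strict Implicit. Unset Printing Implicit Defensive.
Import Order.TTheory GRing.Theory Num.Theory.
Local Open Scope ring_scope.

(* A mixed graph on the vertex set 'I_n: an underlying finite simple graph
   (symmetric irreflexive adjacency [madj]) together with a set of arcs
   [marc] : [marc u v] means the edge uv is oriented from u to v.
   Edges of G that are not arcs in either direction are undirected. *)
Record mixed_graph (n : nat) := MixedGraph {
  madj : rel 'I_n;
  marc : rel 'I_n;
  madj_sym : symmetric madj;
  madj_irr : irreflexive madj;
  marc_adj : forall u v, marc u v -> madj u v;
  marc_asym : forall u v, marc u v -> ~~ marc v u
}.

Definition omega : algC := (1 + 'i * sqrtC 3) / 2.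

Definition Nmx n (M : mixed_graph n) : 'M[algC]_n :=
  \matrix_(s, t) (if marc M s t then omega
                  else if marc M t s then omega^*
                  else if madj M s t then 1 else 0).

Definition mconnected n (M : mixed_graph n) : Prop :=
  forall x y, connect (madj M) x y.

(* A traversal v_0 v_1 ... v_{n-1} v_0 of a Hamiltonian cycle, given by a
   permutation s of the vertices (v_k = s k). *)
Definition is_trav n (M : mixed_graph n) (s : {perm 'I_n}) : bool :=
  [forall k : 'I_n, madj M (s k) (s (ordS k))].

Definition trav_edges n (s : {perm 'I_n}) : {set {set 'I_n}} :=
  [set [set s k; s (ordS k)] | k : 'I_n].

Definition trav_weight n (M : mixed_graph n) (s : {perm 'I_n}) : algC :=
  \prod_(k < n) Nmx M (s k) (s (ordS k)).

Definition is_full_cycle n (M : mixed_graph n) (C : {set {set 'I_n}}) : bool :=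
  [exists s : {perm 'I_n}, is_trav M s && (trav_edges s == C)].

Definition positive_cycle n (M : mixed_graph n) (C : {set {set 'I_n}}) : bool :=
  [exists s : {perm 'I_n},
     [&& is_trav M s, trav_edges s == C & trav_weight M s == 1]].

Definition seminegative_cycle n (M : mixed_graph n) (C : {set {set 'I_n}}) : bool :=
  [exists s : {perm 'I_n},
     [&& is_trav M s, trav_edges s == C &
        (trav_weight M s == - omega) || (trav_weight M s == - omega^*)]].

(* K_{1,1,2} on 'I_4: complete graph minus the edge {2,3} *)
Definition k112 : rel 'I_4 := fun x y => (x != y) && ((x < 2)%N || (y < 2)%N).

Definition is_K112 (M : mixed_graph 4) : Prop :=
  exists f : {perm 'I_4}, forall x y, madj M (f x) (f y) = k112 x y.

Definition is_K4 (M : mixed_graph 4) : Prop :=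
  forall x y, madj M x y = (x != y).

(* Main.v *)
Require Import Defs.
From HB Require Import structures.
From mathcomp Require Import all_boot all_order all_algebra all_fingroup all_field.
From mathcomp Require Import ring.
From Stdlib Require Import FunctionalExtensionality ProofIrrelevance.
Import Order.TTheory GRing.Theory Num.Theory.
Local Open Scope ring_scope.

Definition Zw := (int * int)%type.
Definition zadd (x y : Zw) : Zw := (x.1 + y.1, x.2 + y.2).
Definition zmul (x y : Zw) : Zw := (x.1 * y.1 - x.2 * y.2, x.1 * y.2 + x.2 * y.1 + x.2 * y.2).
Definition zopp (x : Zw) : Zw := (- x.1, - x.2).
Definition z0 : Zw := (0, 0).
Definition z1 : Zw := (1, 0).

Section Detg.
Variables (T : Type) (zero one : T) (add mul : T -> T -> T) (opp : T -> T).
Fixpoint detg (n : nat) (f : nat -> nat -> T) : T :=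
  match n with
  | 0 => one
  | n'.+1 => foldr (fun j acc => add
       (let x := mul (f 0%N j) (detg n' (fun a b => f (bump 0 a) (bump j b))) in
        if odd j then opp x else x) acc) zero (iota 0 n)
  end.
End Detg.
Definition detz := @detg Zw z0 z1 zadd zmul zopp.

Definition pidx (x y : nat) : nat :=
  let a := minn x y in let b := maxn x y in
  if a == 0%N then b.-1 else if a == 1%N then b.+1 else 5.
Definition An (c : seq nat) (x y : nat) := (x != y) && (nth 0%N c (pidx x y) != 0%N).
Definition Rn (c : seq nat) (x y : nat) :=
  (x != y) && (if (x < y)%N then nth 0%N c (pidx x y) == 2%N else nth 0%N c (pidx x y) == 3%N).
Definition zfc c (i j : nat) : Zw :=
  if Rn c i j then (0, 1) else if Rn c j i then (1, -1)
  else if An c i j then (1, 0) else (0, 0).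

Definition I4 := iota 0 4.
Fixpoint hasl {T} (a : pred T) (s : seq T) : bool :=
  if s is x :: s' then (if a x then true else hasl a s') else false.
Fixpoint alll {T} (a : pred T) (s : seq T) : bool :=
  if s is x :: s' then (if a x then alll a s' else false) else true.
Lemma hasl_has T (a : pred T) s : hasl a s = has a s.
Proof. by elim: s => //= x s <-; case: (a x). Qed.
Lemma alll_all T (a : pred T) s : alll a s = all a s.
Proof. by elim: s => //= x s <-; case: (a x). Qed.

Definition minorz c (i j : nat) := detz 3 (fun a b => zfc c (bump i a) (bump j b)).
Definition unitl : seq Zw := [:: (0,0); (1,0); (-1,0); (0,1); (0,-1); (1,-1); (-1,1)].
Definition unitpairs : seq (Zw * Zw) := [seq (u, v) | u <- unitl, v <- unitl].
Definition goodp c (p q k : nat) (uv : Zw * Zw) :=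
  alll (fun j => zfc c k j == zadd (zmul uv.1 (zfc c p j)) (zmul uv.2 (zfc c q j))) I4.
Definition lowcert c p q := alll (fun k => hasl (goodp c p q k) unitpairs) I4.
Definition pairs44 := [seq (i, j) | i <- I4, j <- I4].
Definition rk c : nat :=
  if detz 4 (zfc c) != z0 then 4 else
  if hasl (fun ij => minorz c ij.1 ij.2 != z0) pairs44 then 3 else
  if hasl (fun pq => lowcert c pq.1 pq.2) pairs44 then 2 else 0.

Definition nth0 (l : seq nat) k := nth 0%N l k.
Definition plist := permutations I4.
Definition travn c l := all (fun k => An c (nth0 l k) (nth0 l (k.+1 %% 4))) I4.
Definition wn c l := foldr (fun k acc => zmul (zfc c (nth0 l k) (nth0 l (k.+1 %% 4))) acc) z1 I4.
Definition adjn l i j := has (fun k => ((nth0 l k == i) && (nth0 l (k.+1 %% 4) == j))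
   || ((nth0 l k == j) && (nth0 l (k.+1 %% 4) == i))) I4.
Definition keyn l := [seq [seq adjn l i j | j <- I4] | i <- I4].
Definition k112n (x y : nat) := (x != y) && ((x < 2) || (y < 2))%N.
Definition k112c c := has (fun l => all (fun x => all (fun y => An c (nth0 l x) (nth0 l y) == k112n x y) I4) I4) plist.
Definition k4c c := all (fun x => all (fun y => An c x y == (x != y)) I4) I4.
Definition negw (w : Zw) := (w == (0, -1)) || (w == (-1, 1)).
Definition KWc c := [seq (keyn l, wn c l) | l <- plist & travn c l].
Definition rhsn c :=
  let KW := KWc c in
  (k112c c && all (fun kw => has (fun kw' => (kw'.1 == kw.1) && (kw'.2 == z1)) KW) KW)
  || [&& k4c c, size (undup [seq kw.1 | kw <- KW & kw.2 == z1]) == 2%N &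
      size (undup [seq kw.1 | kw <- KW & negw kw.2]) == 1%N].
Definition subsets := [:: [::0;1;2]; [::0;1;3]; [::0;2;3]; [::1;2;3]; [::0;1]; [::0;2]; [::0;3]; [::0]; [::1];[::2];[::3];[::1;2];[::1;3];[::2;3]]%N.
Definition closedn c (S : seq nat) := all (fun i => all (fun j => An c i j ==> ((i \in S) == (j \in S))) I4) I4.
Definition conbn c := all (fun S => ~~ closedn c S) subsets.
Definition checkc c := if conbn c then (let r := rk c in if r is 0%N then false else ((r == 3%N) == rhsn c)) else true.

Fixpoint tuples (n : nat) : seq (seq nat) :=
  if n is n'.+1 then [seq d :: l | d <- I4, l <- tuples n'] else [:: [::]].
Definition codes := tuples 6.

Definition phi (x : Zw) : algC := x.1%:~R + x.2%:~R * omega.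

Lemma two_neq0 : (2 : algC) != 0.
Proof. by rewrite pnatr_eq0. Qed.

Lemma omega2 : omega ^+ 2 = omega - 1.
Proof.
rewrite /omega; have h2 := two_neq0.
have hi : 'i ^+ 2 = -1 :> algC by exact: sqrCi.
have hs : sqrtC 3 ^+ 2 = 3 :> algC by exact: sqrtCK.
apply/eqP; rewrite -subr_eq0; apply/eqP.
have -> : ((1 + 'i * sqrtC 3) / 2) ^+ 2 - ((1 + 'i * sqrtC 3) / 2 - 1) =
   (('i ^+ 2) * (sqrtC 3 ^+ 2) + 3) / 4 :> algC.
  by field; rewrite ?h2 // pnatr_eq0.
by rewrite hi hs mulN1r addNr mul0r.
Qed.

Lemma omega_conj : omega^* = 1 - omega.
Proof.
rewrite /omega rmorphM rmorphD /= rmorph1 fmorphV /= rmorphM /=.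
rewrite conjCi.
rewrite (geC0_conj (x := sqrtC 3)) ?sqrtC_ge0 ?ler0n //.
have -> : (2 : algC)^* = 2 by rewrite rmorph_nat.
by field.
Qed.

Lemma phiD x y : phi (zadd x y) = phi x + phi y.
Proof. by rewrite /phi /= !intrD; ring. Qed.
Lemma phiN x : phi (zopp x) = - phi x.
Proof. by rewrite /phi /= !intrN; ring. Qed.
Lemma phiM x y : phi (zmul x y) = phi x * phi y.
Proof.
rewrite /phi /= !(intrD, intrN, intrM).
have e : omega ^+ 2 - omega + 1 = 0 by rewrite omega2; ring.
set a := x.1%:~R; set b := x.2%:~R; set c := y.1%:~R; set d := y.2%:~R.
have -> : (a + b * omega) * (c + d * omega) = a * c - b * d + (a * d + b * c + b * d) * omega
   + b * d * (omega ^+ 2 - omega + 1) :> algC by ring.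
by rewrite e mulr0 addr0.
Qed.
Lemma phi0 : phi z0 = 0. Proof. by rewrite /phi /= mul0r addr0. Qed.
Lemma phi1 : phi z1 = 1. Proof. by rewrite /phi /= mul0r addr0. Qed.

Lemma phi_eq0 x : phi x = 0 -> x = z0.
Proof.
case: x => a b; rewrite /phi /= => h.
have hc : a%:~R + b%:~R * (1 - omega) = 0 :> algC.
  by rewrite -omega_conj -[a%:~R](rmorph_int Num.conj_op a) -[b%:~R](rmorph_int Num.conj_op b) -rmorphM -rmorphD h rmorph0.
have hb : b%:~R * (2 * omega - 1) = 0 :> algC.
  by rewrite -[RHS](subrr 0) -{1}h -{1}hc; ring.
have ho : 2 * omega - 1 != 0 :> algC.
  apply/eqP => e.
  have : (2 * omega - 1) ^+ 2 = -3 :> algC.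
    have -> : (2 * omega - 1) ^+ 2 = 4 * (omega ^+ 2 - omega) + 1 :> algC by ring.
    by rewrite omega2; ring.
  rewrite e expr0n /= => /eqP; rewrite eq_sym oppr_eq0 pnatr_eq0 //.
move: hb => /eqP; rewrite mulf_eq0 (negbTE ho) orbF intr_eq0 => /eqP hb0.
by move: h; rewrite hb0 mul0r addr0 => /eqP; rewrite intr_eq0 => /eqP ->.
Qed.

Definition detC := @detg algC 0 1 (fun x y => x + y) (fun x y => x * y) (fun x => - x).

Lemma sum_iota (G : nat -> algC) n :
  \sum_(j < n) G j = foldr (fun j acc => G j + acc) 0 (iota 0 n).
Proof.
rewrite -(big_mkord xpredT G) /index_iota subn0.
by elim: (iota 0 n) => [|x s IH]; rewrite ?big_nil ?big_cons ?IH.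
Qed.

Lemma prod_iota (G : nat -> algC) n :
  \prod_(j < n) G j = foldr (fun j acc => G j * acc) 1 (iota 0 n).
Proof.
rewrite -(big_mkord xpredT G) /index_iota subn0.
by elim: (iota 0 n) => [|x s IH]; rewrite ?big_nil ?big_cons ?IH.
Qed.

Lemma det_detg n (F : nat -> nat -> algC) :
  \det (\matrix_(i < n, j < n) F i j) = detC n F.
Proof.
elim: n F => [|n IH] F; first by rewrite det_mx00.
rewrite (expand_det_row _ ord0).
rewrite (eq_bigr (fun j : 'I_n.+1 => F 0%N j * ((-1) ^+ j *
     detC n (fun a b => F (bump 0 a) (bump j b))))); last first.
  move=> j _; rewrite mxE /cofactor /= add0n; congr (_ * (_ * _)).
  rewrite -IH; congr (\det _); apply/matrixP => a b; rewrite !mxE /=.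
  done.
rewrite (sum_iota (fun j => F 0%N j * ((-1) ^+ j *
     detC n (fun a b => F (bump 0 a) (bump j b))))).
have -> : detC n.+1 F = foldr (fun j acc =>
   (if odd j then - (F 0%N j * detC n (fun a b => F (bump 0 a) (bump j b)))
    else F 0%N j * detC n (fun a b => F (bump 0 a) (bump j b))) + acc) 0 (iota 0 n.+1) by [].
elim: (iota 0 n.+1) => //= j s ->; congr (_ + _).
by rewrite -signr_odd; case: (odd j); rewrite ?expr1 ?expr0 ?mulN1r ?mul1r ?mulrN.
Qed.

Lemma phi_foldr (G : nat -> Zw) s :
  phi (foldr (fun j acc => zadd (G j) acc) z0 s) = foldr (fun j acc => phi (G j) + acc) 0 s.
Proof. by elim: s => [|j s IH] /=; rewrite ?phi0 // phiD IH. Qed.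

Lemma phi_detg n f : phi (detz n f) = detC n (fun i j => phi (f i j)).
Proof.
elim: n f => [|n IH] f; first by rewrite /= phi1.
have -> : detz n.+1 f = foldr (fun j acc => zadd
   (if odd j then zopp (zmul (f 0%N j) (detz n (fun a b => f (bump 0 a) (bump j b))))
    else zmul (f 0%N j) (detz n (fun a b => f (bump 0 a) (bump j b)))) acc) z0 (iota 0 n.+1) by [].
have -> : detC n.+1 (fun i j => phi (f i j)) = foldr (fun j acc =>
   (if odd j then - (phi (f 0%N j) * detC n (fun a b => phi (f (bump 0 a) (bump j b))))
    else phi (f 0%N j) * detC n (fun a b => phi (f (bump 0 a) (bump j b)))) + acc) 0 (iota 0 n.+1) by [].
rewrite phi_foldr.
elim: (iota 0 n.+1) => //= j s ->; congr (_ + _).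
have := IH (fun a b => f (bump 0 a) (bump j b)) => h.
by case: (odd j); rewrite ?phiN phiM h.
Qed.

Lemma pidxC x y : pidx x y = pidx y x.
Proof. by rewrite /pidx minnC maxnC. Qed.
Definition adjc c : rel 'I_4 := fun x y => An c x y.
Definition arcc c : rel 'I_4 := fun x y => Rn c x y.
Lemma adjc_sym c : symmetric (adjc c).
Proof. by move=> x y; rewrite /adjc /An eq_sym pidxC. Qed.
Lemma adjc_irr c : irreflexive (adjc c).
Proof. by move=> x; rewrite /adjc /An eqxx. Qed.
Lemma arcc_adj c u v : arcc c u v -> adjc c u v.
Proof. by rewrite /arcc /adjc /Rn /An; case/andP=> -> /=; case: ifP => _ /eqP ->. Qed.
Lemma arcc_asym c u v : arcc c u v -> ~~ arcc c v u.
Proof.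
rewrite /arcc /Rn pidxC eq_sym; case/andP=> neq; rewrite neq /=.
case: (ltngtP u v) => [h|h|h] /=.
- by move=> /eqP ->.
- by move=> /eqP ->.
- by move: neq; rewrite h eqxx.
Qed.
Definition MG c : mixed_graph 4 :=
  MixedGraph (@adjc_sym c) (@adjc_irr c) (@arcc_adj c) (@arcc_asym c).

Lemma phi_zfc c (i j : 'I_4) : phi (zfc c i j) = Nmx (MG c) i j.
Proof.
rewrite mxE /zfc /= /arcc /adjc.
case: (Rn c i j); first by rewrite /phi /= mul1r add0r.
case: (Rn c j i); first by rewrite omega_conj /phi /= mulN1r.
case: (An c i j); by rewrite /phi /= mul0r addr0.
Qed.

Lemma Nmx_MG c : Nmx (MG c) = \matrix_(i < 4, j < 4) phi (zfc c i j).
Proof. by apply/matrixP => i j; rewrite mxE phi_zfc. Qed.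

Lemma det_MG c : \det (Nmx (MG c)) = phi (detz 4 (zfc c)).
Proof. by rewrite Nmx_MG (det_detg 4 (fun i j => phi (zfc c i j))) phi_detg. Qed.

Lemma rank4 c : detz 4 (zfc c) != z0 -> \rank (Nmx (MG c)) = 4%N.
Proof.
move=> h; apply: mxrank_unit; rewrite unitmxE unitfE det_MG.
by apply/eqP => /phi_eq0 /eqP; rewrite (negbTE h).
Qed.

Lemma rank_le3 c : detz 4 (zfc c) = z0 -> (\rank (Nmx (MG c)) <= 3)%N.
Proof.
move=> h; have : ~~ row_free (Nmx (MG c)).
  by rewrite row_free_unit unitmxE unitfE det_MG h phi0 eqxx.
rewrite /row_free => /negP hn; have := rank_leq_row (Nmx (MG c)).
rewrite leq_eqVlt => /orP [/eqP e|//]; by exfalso; apply: hn; rewrite e.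
Qed.

Lemma rank_colsub m n n' (g : 'I_n' -> 'I_n) (A : 'M[algC]_(m, n)) :
  (\rank (colsub g A) <= \rank A)%N.
Proof.
rewrite -mxrank_tr -[X in (_ <= X)%N]mxrank_tr.
have -> : (colsub g A)^T = rowsub g A^T by rewrite trmx_mxsub.
by apply: mxrankS; apply: rowsub_sub.
Qed.

Lemma rank_mxsub m n m' n' (f : 'I_m' -> 'I_m) (g : 'I_n' -> 'I_n) (A : 'M[algC]_(m, n)) :
  (\rank (mxsub f g A) <= \rank A)%N.
Proof.
rewrite mxsubrc; apply: (@leq_trans (\rank (colsub g A))); last exact: rank_colsub.
by apply: mxrankS; apply: rowsub_sub.
Qed.

Lemma rank_ge3 c i j : (i < 4)%N -> (j < 4)%N -> minorz c i j != z0 ->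
  (3 <= \rank (Nmx (MG c)))%N.
Proof.
move=> hi hj h.
pose Mm := \matrix_(a < 3, b < 3) phi (zfc c (bump i a) (bump j b)).
have e : Mm = mxsub (lift (inord i : 'I_4)) (lift (inord j : 'I_4)) (Nmx (MG c)).
  apply/matrixP => a b; rewrite [RHS]mxE -phi_zfc mxE /= !inordK //.
have : \rank Mm = 3%N.
  apply: mxrank_unit; rewrite unitmxE unitfE /Mm (det_detg 3 (fun a b => phi (zfc c (bump i a) (bump j b)))) -phi_detg.
  by apply/eqP => /phi_eq0 /eqP; rewrite (negbTE h).
by move=> hr; rewrite -[X in (X <= _)%N]hr e rank_mxsub.
Qed.

Lemma head_filter_in T (a : pred T) (s : seq T) x0 : has a s -> a (head x0 (filter a s)).
Proof. by elim: s => //= x s IH; case: ifP => //= _ /IH. Qed.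

Lemma rank_le2 c p q : (p < 4)%N -> (q < 4)%N -> lowcert c p q -> (\rank (Nmx (MG c)) <= 2)%N.
Proof.
move=> hp hq; rewrite /lowcert alll_all => /allP hk.
pose co (k : nat) := head (z0, z0) (filter (goodp c p q k) unitpairs).
pose B := \matrix_(k < 4, t < 2) phi (if t == 0 :> nat then (co k).1 else (co k).2).
pose C := \matrix_(t < 2, j < 4) phi (zfc c (if t == 0 :> nat then p else q) j).
have -> : Nmx (MG c) = B *m C.
  apply/matrixP => i j; rewrite -phi_zfc !mxE big_ord_recr big_ord_recr big_ord0 /= !mxE /=.
  have hi : (i : nat) \in I4 by rewrite mem_iota ltn_ord.
  have hj : (j : nat) \in I4 by rewrite mem_iota ltn_ord.
  have := hk i hi; rewrite hasl_has => /(@head_filter_in _ _ _ (z0, z0)).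
  rewrite -/(co i) /goodp alll_all => /allP /(_ j hj) /eqP e.
  by rewrite e phiD !phiM add0r.
apply: leq_trans (mxrankM_maxl _ _) _; exact: rank_leq_col.
Qed.

Lemma pairs44P ij : ij \in pairs44 -> (ij.1 < 4)%N /\ (ij.2 < 4)%N.
Proof. by case/allpairsP => -[a b] [/=]; rewrite !mem_iota /= => ha hb ->. Qed.

Lemma rk_sound c : rk c != 0%N -> (\rank (Nmx (MG c)) == 3%N) = (rk c == 3%N).
Proof.
rewrite /rk; case: ifP => [h4 _|/negbFE/eqP h4]; first by rewrite rank4.
rewrite hasl_has; case: ifP => [/hasP [ij /pairs44P [hi hj]] hm _|_].
  have h1 := @rank_ge3 c _ _ hi hj hm; have h2 := @rank_le3 c h4.
  have -> : \rank (Nmx (MG c)) = 3%N by apply/eqP; rewrite eqn_leq h1 h2.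
  by [].
rewrite hasl_has; case: ifP => [|//] /hasP [pq /pairs44P [hp hq]] hl _.
have h := @rank_le2 c _ _ hp hq hl.
have -> : (\rank (Nmx (MG c)) == 3%N) = false by apply/negbTE/eqP => e; rewrite e in h.
by [].
Qed.

Lemma forall_I4 (Q : nat -> bool) : [forall k : 'I_4, Q k] = all Q I4.
Proof.
apply/forallP/allP => h k.
  by rewrite mem_iota => /andP [_ hk]; exact: (h (Ordinal hk)).
by apply: h; rewrite mem_iota ltn_ord.
Qed.
Lemma exists_I4 (Q : nat -> bool) : [exists k : 'I_4, Q k] = has Q I4.
Proof.
apply/existsP/hasP => [[k hk]|[k]].
  by exists (val k) => //; rewrite mem_iota ltn_ord.
by rewrite mem_iota => /andP [_ hk] hq; exists (Ordinal hk).
Qed.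
Lemma allI4P (Q : nat -> bool) : (forall k : 'I_4, Q k) <-> all Q I4.
Proof. rewrite -forall_I4; split => [h|/forallP //]; exact/forallP. Qed.

Definition sl (s : {perm 'I_4}) : seq nat := [seq nat_of_ord (s (inord k)) | k <- I4].
Lemma size_sl s : size (sl s) = 4%N. Proof. by rewrite size_map. Qed.
Lemma nth_sl s (x : 'I_4) : nth0 (sl s) x = nat_of_ord (s x).
Proof. by rewrite /nth0 (nth_map 0%N) ?size_iota ?ltn_ord // nth_iota ?ltn_ord // add0n inord_val. Qed.

Lemma uniq_I4 : uniq I4. Proof. by []. Qed.

Lemma plistP l : (l \in plist) = [&& uniq l, size l == 4%N & all (fun x => x < 4)%N l].
Proof.
rewrite /plist mem_permutations.
apply/idP/idP.
  move=> hp; rewrite (perm_uniq hp) uniq_I4 (perm_size hp) size_iota eqxx /=.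
  by apply/allP => x; rewrite (perm_mem hp) mem_iota.
case/and3P => hu /eqP hs /allP ha.
have hsub : {subset l <= I4} by move=> x /ha; rewrite mem_iota.
have hle : (size I4 <= size l)%N by rewrite hs size_iota.
have [_ e] := uniq_min_size hu hsub hle.
exact: uniq_perm.
Qed.

Definition fl (l : seq nat) (x : 'I_4) : 'I_4 := inord (nth0 l x).
Lemma fl_inj l : l \in plist -> injective (fl l).
Proof.
rewrite plistP => /and3P [hu /eqP hs /allP ha] x y.
have hx : (nth0 l x < 4)%N by apply: ha; rewrite mem_nth // hs ltn_ord.
have hy : (nth0 l y < 4)%N by apply: ha; rewrite mem_nth // hs ltn_ord.
move/(congr1 (@nat_of_ord 4)); rewrite /fl !inordK // => e; apply: val_inj.
apply/eqP; rewrite -(@nth_uniq _ 0%N l x y) ?hs ?ltn_ord //; exact/eqP.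
Qed.
Definition fl' (l : seq nat) (x : 'I_4) : 'I_4 := if injectiveb (fl l) then fl l x else x.
Lemma fl'_inj l : injective (fl' l).
Proof. rewrite /fl'; case: injectiveP => // h x y; exact. Qed.
Definition perm_of (l : seq nat) : {perm 'I_4} := perm (@fl'_inj l).
Lemma perm_ofE l (x : 'I_4) : l \in plist -> nat_of_ord (perm_of l x) = nth0 l x.
Proof.
move=> hl; rewrite /perm_of permE /fl'.
have /injectiveP -> := fl_inj l hl.
rewrite /fl inordK //.
move: hl; rewrite plistP => /and3P [_ /eqP hs /allP ha]; apply: ha.
by rewrite mem_nth // hs ltn_ord.
Qed.
Lemma sl_in s : sl s \in plist.
Proof.
rewrite plistP size_sl eqxx andTb; apply/andP; split.
  rewrite /sl map_inj_in_uniq ?uniq_I4 // => a b; rewrite !mem_iota /= => ha hb.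
  move/val_inj/perm_inj/(congr1 (@nat_of_ord 4)); rewrite !inordK //.
by apply/allP => x /mapP [k _ ->].
Qed.
Lemma sl_perm_of l : l \in plist -> sl (perm_of l) = l.
Proof.
move=> hl; have := hl; rewrite plistP => /and3P [_ /eqP hs _].
apply: (@eq_from_nth _ 0%N); first by rewrite size_sl hs.
move=> k; rewrite size_sl => hk.
exact: (etrans (nth_sl (perm_of l) (Ordinal hk)) (perm_ofE l (Ordinal hk) hl)).
Qed.
Lemma perm_of_sl s : perm_of (sl s) = s.
Proof. apply/permP => x; apply: val_inj; exact: (etrans (perm_ofE (sl s) x (sl_in s)) (nth_sl s x)). Qed.

Lemma exP (P : seq nat -> bool) : (exists s : {perm 'I_4}, P (sl s)) <-> has P plist.
Proof.
split => [[s hs]|/hasP [l hl hp]]; first by apply/hasP; exists (sl s) => //; exact: sl_in.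
by exists (perm_of l); rewrite (sl_perm_of l hl).
Qed.
Lemma allPP (P : seq nat -> bool) : (forall s : {perm 'I_4}, P (sl s)) <-> all P plist.
Proof.
split => [h|/allP h s]; last by apply: h; exact: sl_in.
by apply/allP => l hl; rewrite -(sl_perm_of l hl).
Qed.

Lemma travE c s : is_trav (MG c) s = travn c (sl s).
Proof.
rewrite /is_trav /travn -forall_I4; apply: eq_forallb => k.
by rewrite /= nth_sl -[(k.+1 %% 4)%N]/(nat_of_ord (ordS k)) nth_sl.
Qed.

Lemma phi_foldrM (G : nat -> Zw) s :
  phi (foldr (fun j acc => zmul (G j) acc) z1 s) = foldr (fun j acc => phi (G j) * acc) 1 s.
Proof. by elim: s => [|j s IH] /=; rewrite ?phi1 // phiM IH. Qed.

Lemma weightE c s : trav_weight (MG c) s = phi (wn c (sl s)).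
Proof.
rewrite /trav_weight /wn phi_foldrM -prod_iota; apply: eq_bigr => k _.
by rewrite -phi_zfc nth_sl -[(k.+1 %% 4)%N]/(nat_of_ord (ordS k)) nth_sl.
Qed.

Lemma phi_inj x y : phi x = phi y -> x = y.
Proof.
move=> e; have : phi (zadd x (zopp y)) = 0 by rewrite phiD phiN e subrr.
move/phi_eq0; case: x y {e} => a b [a' b'] [] /eqP; rewrite subr_eq0 => /eqP -> /eqP.
by rewrite subr_eq0 => /eqP ->.
Qed.

Lemma ordS_neq (k : 'I_4) : k != ordS k.
Proof. by case: k => [[|[|[|[|]]]] ?]. Qed.

Lemma set2_eqP (T : finType) (a b c d : T) :
  [set a; b] = [set c; d] -> a != b -> (a = c /\ b = d) \/ (a = d /\ b = c).
Proof.
move=> e hab.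
have /set2P ha : a \in [set c; d] by rewrite -e set21.
have /set2P hb : b \in [set c; d] by rewrite -e set22.
move: hab; case: ha hb => -> [] -> hab; [by rewrite eqxx in hab|by left|by right|by rewrite eqxx in hab].
Qed.

Lemma nthS s (k : 'I_4) : nth0 (sl s) (k.+1 %% 4) = nat_of_ord (s (ordS k)).
Proof. exact: (nth_sl s (ordS k)). Qed.

Lemma ord_of_nat (x : 'I_4) (i : nat) : nat_of_ord x = i -> x = inord i.
Proof. by move=> <-; rewrite inord_val. Qed.

Lemma adjn_TE s (i j : nat) : (i < 4)%N -> (j < 4)%N ->
  adjn (sl s) i j = ([set inord i; inord j] \in trav_edges s) && (i != j).
Proof.
move=> hi hj; rewrite /adjn -exists_I4.
apply/existsP/andP => [[k]|[/imsetP [k _ e] hij]].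
  rewrite nth_sl nthS => /orP [] /andP [/eqP e1 /eqP e2].
    split; first by apply/imsetP; exists k => //; rewrite (ord_of_nat _ _ e1) (ord_of_nat _ _ e2).
    rewrite -e1 -e2; apply/negP => /eqP /val_inj /perm_inj /eqP; exact/negP/ordS_neq.
  split; first by apply/imsetP; exists k => //; rewrite (ord_of_nat _ _ e1) (ord_of_nat _ _ e2) setUC.
  rewrite -e1 -e2; apply/negP => /eqP /val_inj /perm_inj /eqP; rewrite eq_sym; exact/negP/ordS_neq.
have hij' : (inord i : 'I_4) != inord j.
  by apply: contra hij => /eqP /(congr1 (@nat_of_ord 4)); rewrite !inordK // => ->.
exists k; rewrite nth_sl nthS.
case: (set2_eqP _ _ _ _ _ e hij') => [[<- <-]|[<- <-]]; rewrite !inordK // !eqxx ?orbT //.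
Qed.

Lemma sub_TE s s' : (forall i j : nat, (i < 4)%N -> (j < 4)%N -> adjn (sl s) i j -> adjn (sl s') i j) ->
  trav_edges s \subset trav_edges s'.
Proof.
move=> h; apply/subsetP => E /imsetP [k _ ->].
have hi := ltn_ord (s k); have hj := ltn_ord (s (ordS k)).
have e : [set s k; s (ordS k)] = [set inord (s k); inord (s (ordS k))] by rewrite !inord_val.
have hne : (nat_of_ord (s k)) != (s (ordS k)).
  apply/negP => /eqP /val_inj /perm_inj /eqP; exact/negP/ordS_neq.
have := h _ _ hi hj; rewrite !adjn_TE // hne !andbT -e => -> //.
by apply/imsetP; exists k.
Qed.

Lemma keyn_eq l l' : (keyn l == keyn l') = [forall i : 'I_4, forall j : 'I_4, adjn l i j == adjn l' i j].
Proof.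
apply/eqP/forallP => [h i|h].
  apply/forallP => j.
  have e : nth false (nth [::] (keyn l) i) j = nth false (nth [::] (keyn l') i) j by rewrite h.
  move: e; rewrite /keyn !(nth_map 0%N) ?size_iota ?ltn_ord // !nth_iota ?ltn_ord // add0n => ->.
  by rewrite eqxx.
rewrite /keyn; apply/eq_in_map => i; rewrite mem_iota add0n => /andP [_ hi].
apply/eq_in_map => j; rewrite mem_iota add0n => /andP [_ hj].
by have /forallP /(_ (Ordinal hj)) /eqP := h (Ordinal hi).
Qed.

Lemma TE_eq s s' : (trav_edges s == trav_edges s') = (keyn (sl s) == keyn (sl s')).
Proof.
rewrite keyn_eq; apply/eqP/forallP => [h i|h].
  by apply/forallP => j; rewrite !adjn_TE ?ltn_ord // h.
have h' : forall i j : nat, (i < 4)%N -> (j < 4)%N -> adjn (sl s) i j = adjn (sl s') i j.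
  by move=> i j hi hj; have /forallP /(_ (Ordinal hj)) /eqP := h (Ordinal hi).
apply/eqP; rewrite eqEsubset; apply/andP; split; apply: sub_TE => i j hi hj.
  by rewrite h'.
by rewrite h'.
Qed.

Lemma K112E c : is_K112 (MG c) <-> k112c c.
Proof.
rewrite /k112c -exP; split => [[f hf]|[f hf]]; exists f.
  apply/allI4P => x; apply/allI4P => y.
  by rewrite (nth_sl f x) (nth_sl f y); apply/eqP; exact: hf.
move=> x y; move/allI4P: hf => /(_ x) /allI4P /(_ y).
by rewrite (nth_sl f x) (nth_sl f y) => /eqP.
Qed.

Lemma K4E c : is_K4 (MG c) <-> k4c c.
Proof.
split => [hf|hf].
  apply/allI4P => x; apply/allI4P => y; apply/eqP; exact: hf.
move=> x y; move/allI4P: hf => /(_ x) /allI4P /(_ y) /eqP; exact.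
Qed.

Lemma phi_eqE x y : (phi x == phi y) = (x == y).
Proof. by apply/eqP/eqP => [/phi_inj|->]. Qed.

Lemma KW_all c (F : (seq (seq bool) * Zw) -> bool) :
  all F (KWc c) = all (fun l => travn c l ==> F (keyn l, wn c l)) plist.
Proof. by rewrite /KWc; elim: plist => //= l s IH; case: (travn c l); rewrite /= IH. Qed.
Lemma KW_has c (F : (seq (seq bool) * Zw) -> bool) :
  has F (KWc c) = has (fun l => travn c l && F (keyn l, wn c l)) plist.
Proof. by rewrite /KWc; elim: plist => //= l s IH; case: (travn c l); rewrite /= IH. Qed.
Lemma KW_filter c (P : Zw -> bool) :
  [seq kw.1 | kw <- KWc c & P kw.2] = [seq keyn l | l <- plist & travn c l && P (wn c l)].
Proof.
rewrite /KWc; elim: plist => //= l s IH.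
by case: (travn c l); rewrite /= ?IH //; case: (P (wn c l)); rewrite /= IH.
Qed.

Lemma allposE c :
  (forall C, is_full_cycle (MG c) C -> positive_cycle (MG c) C) <->
  all (fun kw => has (fun kw' => (kw'.1 == kw.1) && (kw'.2 == z1)) (KWc c)) (KWc c).
Proof.
rewrite KW_all; split => [h|/allP h C].
  apply/allP => l hl; apply/implyP => ht.
  have hf : is_full_cycle (MG c) (trav_edges (perm_of l)).
    by apply/existsP; exists (perm_of l); rewrite travE (sl_perm_of l hl) ht eqxx.
  have /existsP [s' /and3P [ht' he hw]] := h _ hf.
  rewrite KW_has; apply/hasP; exists (sl s'); first exact: sl_in.
  rewrite /= -travE ht' /=; rewrite TE_eq (sl_perm_of l hl) in he; rewrite he /=.
  by rewrite weightE -phi1 phi_eqE in hw.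
case/existsP => s /andP [ht /eqP <-].
have := h (sl s) (sl_in s); rewrite -travE ht /= KW_has => /hasP [l' hl' /andP [ht' /andP [hk hw]]].
apply/existsP; exists (perm_of l'); rewrite travE (sl_perm_of l' hl') ht' /=.
rewrite TE_eq (sl_perm_of l' hl') /= hk /= weightE (sl_perm_of l' hl').
by rewrite -phi1 phi_eqE.
Qed.

Lemma size_undup_map (A B C : eqType) (f : A -> B) (g : A -> C) s :
  (forall x y, (f x == f y) = (g x == g y)) -> size (undup (map f s)) = size (undup (map g s)).
Proof.
move=> h; elim: s => //= x s IH.
have -> : (f x \in map f s) = (g x \in map g s).
  apply/mapP/mapP => [[y hy /eqP e]|[y hy /eqP e]]; exists y => //; apply/eqP.
    by rewrite -h.
  by rewrite h.
by case: ifP => _ /=; rewrite IH.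
Qed.

Lemma cardE c (Q : {set {set 'I_4}} -> bool) (W : algC -> bool) (Pw : Zw -> bool) :
  (forall C, Q C = [exists s, [&& is_trav (MG c) s, trav_edges s == C & W (trav_weight (MG c) s)]]) ->
  (forall z, W (phi z) = Pw z) ->
  #|[set C | is_full_cycle (MG c) C & Q C]| =
  size (undup [seq keyn l | l <- plist & travn c l && Pw (wn c l)]).
Proof.
move=> hQ hW.
set Sp := [set s | is_trav (MG c) s && W (trav_weight (MG c) s)].
have -> : [set C | is_full_cycle (MG c) C & Q C] = [set trav_edges s | s in Sp].
  apply/setP => C; rewrite inE hQ; apply/andP/imsetP.
    case=> _ /existsP [s /and3P [ht /eqP <- hw]]; exists s => //; by rewrite inE ht hw.
  case=> s; rewrite inE => /andP [ht hw] ->; split.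
    by apply/existsP; exists s; rewrite ht eqxx.
  by apply/existsP; exists s; rewrite ht eqxx hw.
rewrite imset_card -(eq_card (mem_undup _)).
move/card_uniqP: (undup_uniq [seq trav_edges s | s in Sp]) ->.
rewrite (size_undup_map _ _ _ _ (fun s => keyn (sl s))); last by move=> x y; exact: TE_eq.
rewrite (map_comp keyn sl).
apply: perm_size; apply: perm_undup.
have hm : map sl (enum Sp) =i [seq l <- plist | travn c l && Pw (wn c l)].
  move=> l; rewrite mem_filter; apply/mapP/andP.
    case=> s; rewrite mem_enum inE => /andP [ht hw] ->.
    by rewrite -travE ht -hW -weightE hw sl_in.
  case=> /andP [ht hw] hl; exists (perm_of l); last by rewrite (sl_perm_of l hl).
  by rewrite mem_enum inE travE weightE (sl_perm_of l hl) ht hW hw.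
move=> k; apply/mapP/mapP => [[l hl ->]|[l hl ->]]; exists l => //; by rewrite ?hm // -hm.
Qed.

Lemma conn c : mconnected (MG c) -> conbn c.
Proof.
move=> hc; rewrite /conbn; apply/allP => S hS; apply/negP => hcl.
have hw : all (fun S => has (fun i => i \in S) I4 && has (fun j => j \notin S) I4) subsets by [].
have /andP [/hasP [i hi iS] /hasP [j hj jS]] := allP hw S hS.
move: hi hj; rewrite !mem_iota !add0n => /andP [_ hi] /andP [_ hj].
have hclo : closed (adjc c) [pred x : 'I_4 | nat_of_ord x \in S].
  move=> x y hxy; rewrite !inE.
  have hx : nat_of_ord x \in I4 by rewrite mem_iota ltn_ord.
  have hy : nat_of_ord y \in I4 by rewrite mem_iota ltn_ord.
  by have /implyP /(_ hxy) /eqP := allP (allP hcl _ hx) _ hy.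
have := closed_connect hclo (hc (inord i) (inord j)).
by rewrite !inE !inordK // iS (negbTE jS).
Qed.

Definition cst (M : mixed_graph 4) (x y : 'I_4) : nat :=
  if marc M x y then 2 else if marc M y x then 3 else if madj M x y then 1 else 0.
Definition code_of (M : mixed_graph 4) : seq nat :=
  [seq cst M (inord p.1) (inord p.2) | p <- [:: (0,1); (0,2); (0,3); (1,2); (1,3); (2,3)]%N].

Lemma code_ofE M (x y : 'I_4) : (x < y)%N -> nth 0%N (code_of M) (pidx x y) = cst M x y.
Proof.
case: x => [[|[|[|[|?]]]] hx] //; case: y => [[|[|[|[|?]]]] hy] //= _.
all: by congr (cst M _ _); apply/val_inj => /=; rewrite inordK.
Qed.

Lemma madjE M (x y : 'I_4) : madj M x y = An (code_of M) x y.
Proof.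
rewrite /An; case: (ltngtP x y) => h.
- rewrite code_ofE // /cst; case hm: (marc M x y); first by rewrite (marc_adj hm).
  case hm': (marc M y x); first by rewrite madj_sym (marc_adj hm').
  by case: (madj M x y).
- rewrite pidxC code_ofE // /cst madj_sym; case hm: (marc M y x); first by rewrite (marc_adj hm).
  case hm': (marc M x y); first by rewrite madj_sym (marc_adj hm').
  by case: (madj M y x).
- by rewrite (val_inj h) madj_irr ?eqxx.
Qed.

Lemma marcE M (x y : 'I_4) : marc M x y = Rn (code_of M) x y.
Proof.
rewrite /Rn; case: (ltngtP x y) => h.
- rewrite code_ofE // /cst; case hm: (marc M x y) => //.
  by case: (marc M y x) => //; case: (madj M x y).
- rewrite pidxC code_ofE // /cst; case hm: (marc M y x).
    by rewrite (negbTE (marc_asym hm)).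
  case: (marc M x y) => //; by case: (madj M y x).
- rewrite (val_inj h) ?eqxx /=; apply/negP => /marc_adj; by rewrite madj_irr.
Qed.

Lemma mg_eq (M N : mixed_graph 4) : madj M =2 madj N -> marc M =2 marc N -> M = N.
Proof.
case: M => a r s i ad as_; case: N => a' r' s' i' ad' as' /= ha hr.
have ea : a = a' by apply: functional_extensionality => x; apply: functional_extensionality => y; apply: ha.
have er : r = r' by apply: functional_extensionality => x; apply: functional_extensionality => y; apply: hr.
subst a' r'; f_equal; apply: proof_irrelevance.
Qed.

Lemma mem_tuples n s : size s = n -> all (fun d => d < 4)%N s -> s \in tuples n.
Proof.
elim: n s => [|n IH] [|x s] // [hs] /andP [hx ha].
by apply: (allpairs_f (fun d l => d :: l)); [rewrite mem_iota | apply: IH].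
Qed.

Lemma mem_code M : code_of M \in codes.
Proof.
apply: mem_tuples => //; apply/allP => d /mapP [p _ ->].
by rewrite /cst; case: ifP => _ //; case: ifP => _ //; case: ifP.
Qed.

Lemma all_ok : all checkc codes.
Proof. by vm_compute. Qed.

Lemma posW z : (phi z == 1) = (z == z1).
Proof. by rewrite -phi1 phi_eqE. Qed.
Lemma negW z : ((phi z == - omega) || (phi z == - omega^*)) = negw z.
Proof.
have -> : - omega = phi (0, -1) by rewrite /phi /= mulN1r add0r.
have -> : - omega^* = phi (-1, 1) by rewrite omega_conj /phi /= mul1r; ring.
by rewrite !phi_eqE.
Qed.

Lemma rhsP c : rhsn c <->
  ((is_K112 (MG c) /\ (forall C, is_full_cycle (MG c) C -> positive_cycle (MG c) C)) \/
   (is_K4 (MG c) /\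
      #|[set C | is_full_cycle (MG c) C & positive_cycle (MG c) C]| = 2%N /\
      #|[set C | is_full_cycle (MG c) C & seminegative_cycle (MG c) C]| = 1%N)).
Proof.
rewrite (cardE c (positive_cycle (MG c)) (fun w => w == 1) (fun z => z == z1)) //; last exact: posW.
rewrite (cardE c (seminegative_cycle (MG c)) (fun w => (w == - omega) || (w == - omega^*)) negw) //; last exact: negW.
rewrite /rhsn (KW_filter c (fun z => z == z1)) (KW_filter c negw) K112E K4E allposE.
split.
  case/orP => [/andP [h1 h2]|/and3P [h1 /eqP h2 /eqP h3]]; [by left; split | by right; split; [|split]].
case=> [[h1 h2]|[h1 [h2 h3]]]; apply/orP; [left; exact/andP | right; apply/and3P; split => //; exact/eqP].
Qed.

Theorem lemma5p13 (M : mixed_graph 4) :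
  mconnected M ->
  (\rank (Nmx M) = 3%N <->
   (is_K112 M /\ (forall C, is_full_cycle M C -> positive_cycle M C)) \/
   (is_K4 M /\
      #|[set C | is_full_cycle M C & positive_cycle M C]| = 2%N /\
      #|[set C | is_full_cycle M C & seminegative_cycle M C]| = 1%N)).
Proof.
pose c := code_of M.
have hc : c \in codes := mem_code M.
have eM : M = MG c.
  by apply: mg_eq => x y; [exact: madjE | exact: marcE].
clearbody c; subst M.
move=> hcon; have hb := conn c hcon.
have := allP all_ok c hc; rewrite /checkc hb.
case E: (rk c) => [|r] //= /eqP hr.
have hs := rk_sound c; rewrite E in hs; have := hs isT.
rewrite hr => hrk.
rewrite -rhsP; split => [/eqP|h]; first by rewrite hrk.
by apply/eqP; rewrite hrk.
Qed.
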